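(* Let $A$ be a finite alphabet and $d: A^n \to A$ a block map. Then $d$ is regressive if and only if the induced sliding block code $\tau_d: A^{\mathbb{N}} \to A^{\mathbb{N}}$ $*$-commutes with the shift map $\sigma$.
   Context: $A$ is a finite set; $\mathbb{N}=\{1,2,3,\dots\}$; $A^{\mathbb{N}}$ is the set of one-sided infinite sequences $x=x_1x_2\cdots$ over $A$; $\sigma(x_1x_2x_3\cdots)=x_2x_3\cdots$. A block map is a function $d: A^n \to A$, and $\tau_d: A^{\mathbb{N}}\to A^{\mathbb{N}}$ is defined by $\tau_d(x)_i = d(x_i \cdots x_{i+n-1})$. The block map $d$ is regressive if for each fixed $x_1 \cdots x_{n-1} \in A^{n-1}$ the function $A\to A$, $a\mapsto d(a x_1 \cdots x_{n-1})$, is bijective. Two functions $S,T: X\to X$ on a set $X$ $*$-commute if $ST=TS$ and for every $(y,z)\in X\times X$ with $S(y)=T(z)$ there exists a unique $x\in X$ with $T(x)=y$ and $S(x)=z$. *)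

(* Defs.v *)
From mathcomp Require Import all_boot.
Set Implicit Arguments. Unset Strict Implicit. Unset Printing Implicit Defensive.

(* One-sided sequences x = x_1 x_2 ... over A are functions nat -> A,
   with x 0 playing the role of x_1. *)
Definition seqN (A : Type) := nat -> A.

Definition shift (A : Type) (x : seqN A) : seqN A := fun i => x i.+1.

(* Block maps d : A^(m+1) -> A (windows of length n = m+1 >= 1). *)
Definition window (A : Type) (m : nat) (x : seqN A) (i : nat) : m.+1.-tuple A :=
  [tuple x (i + val k) | k < m.+1].

Definition tau (A : Type) (m : nat) (d : m.+1.-tuple A -> A) (x : seqN A) : seqN A :=
  fun i => d (window m x i).

Definition regressive (A : Type) (m : nat) (d : m.+1.-tuple A -> A) : Prop :=
  forall w : m.-tuple A, bijective (fun a : A => d (cons_tuple a w)).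

Definition star_commute (X : Type) (S T : X -> X) : Prop :=
  (forall x, S (T x) = T (S x)) /\
  (forall y z, S y = T z -> exists! x, T x = y /\ S x = z).

(* Main.v *)
Require Import Defs.
From mathcomp Require Import all_boot.
From Stdlib Require FunctionalExtensionality.
Notation functional_extensionality := FunctionalExtensionality.functional_extensionality.

Set Implicit Arguments.
Definition consq (A : Type) (a : A) (y : seqN A) : seqN A :=
  fun i => if i is i'.+1 then y i' else a.

Lemma window_S (A : Type) m (x : seqN A) i :
  window m x i.+1 = window m (shift x) i.
Proof. by apply: eq_from_tnth => k; rewrite !tnth_mktuple addSn. Qed.

Lemma window_0 (A : Type) m (x : seqN A) :
  window m x 0 = cons_tuple (x 0) [tuple x (val k).+1 | k < m].
Proof.
apply: eq_from_tnth => k; rewrite tnth_mktuple add0n.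
rewrite (tnth_nth (x 0)) /=.
case: k => [[|k] Hk] //=.
have Hk' : k < m by [].
by rewrite (nth_map (Ordinal Hk')) ?size_enum_ord // nth_enum_ord.
Qed.

Lemma tau_comm (A : Type) m (d : m.+1.-tuple A -> A) x :
  tau d (shift x) = shift (tau d x).
Proof. by apply: functional_extensionality => i; rewrite /tau /shift window_S. Qed.

Lemma tuple_nth (A : Type) m (w : m.-tuple A) (a : A) :
  [tuple (consq a (fun i => nth a w i)) (val k).+1 | k < m] = w.
Proof.
apply: eq_from_tnth => k; rewrite tnth_mktuple /=.
by rewrite (tnth_nth a).
Qed.

Theorem theorem4p9 (A : finType) (m : nat) (d : m.+1.-tuple A -> A) :
  regressive d <-> star_commute (tau d) (@shift A).
Proof.
split.
- move=> Hreg; split; first exact: tau_comm.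
  move=> y z Hyz.
  have [g fg gf] := Hreg [tuple y (val k) | k < m].
  exists (consq (g (z 0)) y); split.
  + split; first by [].
    apply: functional_extensionality => -[|i].
    * rewrite /tau window_0 /=.
      have -> : [tuple consq (g (z 0)) y (val k).+1 | k < m] = [tuple y (val k) | k < m].
        by apply: eq_from_tnth => k; rewrite !tnth_mktuple.
      exact: gf.
    * rewrite /tau window_S.
      by have := congr1 (fun f => f i) Hyz.
  + move=> x' [Hs Ht].
    apply: functional_extensionality => -[|i] /=; last by rewrite -Hs.
    rewrite -Ht /tau window_0.
    have -> : [tuple x' (val k).+1 | k < m] = [tuple y (val k) | k < m].
      by apply: eq_from_tnth => k; rewrite !tnth_mktuple -Hs.
    by rewrite fg.
- move=> [_ Hst] w.
  apply: injF_bij => a b Hab.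
  set y : seqN A := fun i => nth a w i.
  set z : seqN A := fun i => if i is i'.+1 then tau d y i' else d (cons_tuple a w).
  have Hyz : tau d y = shift z by [].
  have [x [_ Hu]] := Hst y z Hyz.
  have Ea : forall c, d (cons_tuple c w) = d (cons_tuple a w) -> consq c y = x.
    move=> c Hc; apply/esym; apply: Hu; split; first by [].
    apply: functional_extensionality => -[|i].
    * by rewrite /tau window_0 /= tuple_nth.
    * by rewrite /tau window_S.
  have E1 := Ea a erefl.
  have E2 := Ea b (esym Hab).
  by have := congr1 (fun f => f 0) (etrans E1 (esym E2)).
Qed.
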